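(* Let $M$ be a paving matroid with $\gamma(M) = \beta(E(M))$, $|E(M)| \ge 2r(M)+2$ and $r(M) \ge 3$. Then there is a basis $B$ of $M$ such that $\gamma(M\backslash B) = \beta(E(M) - B)$ and $r(M\backslash B) = r(M)$.
   Context: A matroid $M$ of rank $r$ is a paving matroid if every circuit of $M$ has at least $r$ elements. For $\emptyset \ne X \subseteq E(M)$, $\beta(X) := |X|/r(X)$ if $r(X) \neq 0$ and $\beta(X) := \infty$ if $r(X)=0$; and $\gamma(N) := \max_{\emptyset \ne X \subseteq E(N)} \beta(X)$ for a matroid $N$ (with $\beta$ computed using the rank function of $N$). $M\backslash B$ denotes the deletion of $B$ from $M$. *)

(* Defs.v *)
From HB Require Import structures.
From mathcomp Require Import all_boot all_order all_algebra.
From mathcomp Require Import constructive_ereal.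
Set Implicit Arguments. Unset Strict Implicit. Unset Printing Implicit Defensive.
Import Order.TTheory GRing.Theory Num.Theory.

Record matroid (T : finType) := Matroid {
  ground : {set T};
  rk : {set T} -> nat;
  rk_le_card : forall X : {set T}, X \subset ground -> (rk X <= #|X|)%N;
  rk_mono : forall X Y : {set T}, X \subset Y -> Y \subset ground -> (rk X <= rk Y)%N;
  rk_submod : forall X Y : {set T}, X \subset ground -> Y \subset ground ->
      (rk (X :|: Y) + rk (X :&: Y) <= rk X + rk Y)%N
}.

Section Matroids.
Variable T : finType.
Implicit Types (M : matroid T) (X B C : {set T}).

Definition rank M : nat := rk M (ground M).

Definition indep M X : bool := (X \subset ground M) && (rk M X == #|X|).

Definition circuit M C : Prop :=
  [/\ C \subset ground M, ~~ indep M C & forall x, x \in C -> indep M (C :\ x)].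

Definition basis M B : Prop :=
  indep M B /\ forall x, x \in ground M -> x \notin B -> ~~ indep M (x |: B).

Definition paving M : Prop := forall C, circuit M C -> (rank M <= #|C|)%N.

Lemma delete_subset M B X : X \subset ground M :\: B -> X \subset ground M.
Proof. by move=> H; apply: subset_trans H (subsetDl _ _). Qed.

Definition delete M B : matroid T :=
  @Matroid T (ground M :\: B) (rk M)
    (fun X HX => rk_le_card (delete_subset HX))
    (fun X Y HXY HY => rk_mono HXY (delete_subset HY))
    (fun X Y HX HY => rk_submod (delete_subset HX) (delete_subset HY)).

Definition beta M X : \bar rat :=
  if rk M X == 0%N then +oo%E else ((#|X|%:R / (rk M X)%:R : rat)%:E)%E.

Definition gamma M : \bar rat :=
  \big[Order.max/-oo%E]_(X : {set T} | (X != set0) && (X \subset ground M)) beta M X.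

End Matroids.

(* Main.v *)
Require Import Defs.
From mathcomp Require Import all_boot all_order all_algebra.
From mathcomp Require Import constructive_ereal.
From mathcomp Require Import zify.
Set Implicit Arguments. Unset Strict Implicit. Unset Printing Implicit Defensive.
Import Order.TTheory GRing.Theory Num.Theory.

Section Helpers.
Variable T : finType.

Lemma subset_card_ex (A : {set T}) k : k <= #|A| -> exists B : {set T}, B \subset A /\ #|B| = k.
Proof.
elim: k => [|k IH] hk; first by exists set0; rewrite sub0set cards0.
have [B [sBA cB]] := IH (ltnW hk).
have nAB : ~~ (A \subset B).
  apply/negP => sAB; have := subset_leq_card sAB; lia.
have [a aA aB] := subsetPn nAB.
exists (a |: B); split; first by rewrite subUset sub1set aA sBA.
by rewrite cardsU1 aB cB.
Qed.

Variable M : matroid T.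
Local Notation E := (ground M).
Local Notation rk := (rk M).
Local Notation r := (rank M).
Implicit Types (X Y A Z B C W : {set T}).

Lemma rk_le_r X : X \subset E -> rk X <= r.
Proof. by move=> hX; apply: rk_mono. Qed.

Lemma indep0 : indep M set0.
Proof.
rewrite /indep sub0set /= cards0; have := rk_le_card (sub0set E); rewrite cards0; lia.
Qed.

Lemma dep_has_circuit m X : #|X| <= m -> X \subset E -> ~~ indep M X ->
  exists C : {set T}, C \subset X /\ circuit M C.
Proof.
elim: m X => [|m IH] X hm hXE hd.
  move: hm; rewrite leqn0 cards_eq0 => /eqP hX0; by move: hd; rewrite hX0 indep0.
case: (boolP [exists x in X, ~~ indep M (X :\ x)]).
  move=> /exists_inP [x xX hx].
  have [||C [sC cC]] := IH (X :\ x) _ _ hx.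
  - by move: hm; rewrite (cardsD1 x X) xX; lia.
  - exact: subset_trans (subsetDl _ _) hXE.
  by exists C; split => //; exact: subset_trans sC (subsetDl _ _).
move=> hall; exists X; split => //; split => // x xX.
by move/exists_inPn: hall => /(_ x xX); rewrite negbK.
Qed.

Hypothesis Hpav : paving M.

Lemma indep_small X : X \subset E -> #|X| < r -> rk X = #|X|.
Proof.
move=> hXE hX; apply/eqP; apply/negPn/negP => hne.
have hd : ~~ indep M X by rewrite /indep hXE /= hne.
have [C [sCX cC]] := dep_has_circuit (leqnn _) hXE hd.
have := Hpav cC; have := subset_leq_card sCX; lia.
Qed.

Lemma small_rank X : X \subset E -> rk X + 2 <= r -> #|X| <= rk X.
Proof.
move=> hXE hr; rewrite leqNgt; apply/negP => hlt.
have [W [sWX cW]] := subset_card_ex hlt.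
have hWE : W \subset E := subset_trans sWX hXE.
have := indep_small hWE; rewrite cW => /(_ ltac:(lia)) hW.
have := rk_mono sWX hXE; lia.
Qed.

Lemma rk_add1 x X : x \in E -> X \subset E -> rk (x |: X) <= rk X + 1.
Proof.
move=> xE hX.
have hx : [set x] \subset E by rewrite sub1set.
have := rk_submod hx hX; have := rk_le_card hx; rewrite cards1; lia.
Qed.

Lemma rk_span A Z : A \subset E -> Z \subset E ->
  (forall z, z \in Z -> rk (z |: A) <= rk A) -> rk (A :|: Z) <= rk A.
Proof.
move=> hA; elim: {Z}_.+1 {-2}Z (ltnSn #|Z|) => // m IH Z hZm hZE hz.
case: (set_0Vmem Z) => [->|[z zZ]]; first by rewrite setU0.
set Z' := Z :\ z.
have hZ' : Z' \subset E := subset_trans (subsetDl _ _) hZE.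
have IH' : rk (A :|: Z') <= rk A.
  apply: IH => //; first by move: hZm; rewrite /Z' (cardsD1 z Z) zZ; lia.
  by move=> y /setD1P [_ yZ]; exact: hz.
have zE : z \in E := subsetP hZE z zZ.
have hU : A :|: Z' \subset E by rewrite subUset hA hZ'.
have hzA : z |: A \subset E by rewrite subUset sub1set zE hA.
have key := rk_submod hU hzA.
have eU : (A :|: Z') :|: (z |: A) = A :|: Z.
  apply/setP => y; rewrite !inE; case: (eqVneq y z) => [->|nyz] /=.
    by rewrite zZ !orbT.
  by case: (y \in A); case: (y \in Z).
have hI : A \subset (A :|: Z') :&: (z |: A) by rewrite subsetI subsetUl subsetUr.
have hIE : (A :|: Z') :&: (z |: A) \subset E by apply: subset_trans (subsetIl _ _) hU.
have := rk_mono hI hIE; have := hz z zZ; move: key; rewrite eU; lia.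
Qed.

Lemma extend A Y : A \subset Y -> Y \subset E -> indep M A ->
  exists B : {set T}, [/\ A \subset B, B \subset Y, indep M B & #|B| = rk Y].
Proof.
move=> hAY hYE; elim: {A}_.+1 {-2}A (ltnSn (rk Y - #|A|)) hAY => // m IH A hm hAY hA.
have hAE := subset_trans hAY hYE.
move: (hA); rewrite /indep => /andP [_ /eqP rA].
case: (leqP (rk Y) (rk A)) => hc.
  exists A; split => //; have := rk_mono hAY hYE; lia.
case: (boolP [exists y in Y :\: A, rk A < rk (y |: A)]); last first.
  move/exists_inPn => hall.
  have := @rk_span A (Y :\: A) hAE (subset_trans (subsetDl _ _) hYE).
  have -> : A :|: (Y :\: A) = Y.
    apply/setP => y; rewrite !inE; case yA: (y \in A) => //=.
    by rewrite (subsetP hAY y yA).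
  have H : forall z, z \in Y :\: A -> rk (z |: A) <= rk A.
    by move=> z zY; have := hall z zY; rewrite -leqNgt.
  move=> /(_ H); lia.
move=> /exists_inP [y /setDP [yY yA] hy].
have yE : y \in E := subsetP hYE y yY.
have hyA : y |: A \subset E by rewrite subUset sub1set yE hAE.
have iA' : indep M (y |: A).
  rewrite /indep hyA /=; have := rk_le_card hyA; rewrite cardsU1 yA; lia.
have [||B [sB1 sB2 iB cB]] := IH (y |: A) _ _ iA'.
- have := rk_mono hAY hYE; move: hm; rewrite cardsU1 yA; lia.
- by rewrite subUset sub1set yY hAY.
exists B; split => //; exact: subset_trans (subsetUr _ _) sB1.
Qed.

Lemma basis_full B : indep M B -> #|B| = r -> basis M B.
Proof.
move=> hB cB; split => // x xE xB; apply/negP => /andP [hs /eqP hr].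
have := rk_le_r hs; rewrite hr cardsU1 xB cB; lia.
Qed.

End Helpers.

Lemma A1 r h n t : 3 <= r -> 2*r+2 <= n -> t*r <= (r-1)*(n-r) -> (r-1)*(n-r) < t.+1*r ->
  r*h <= (r-1)*n -> (r-1)*(n-r) < r*h -> [/\ t < h, h - t <= r - 1 & t + r <= n].
Proof. move=> *; split; nia. Qed.
Lemma A2 r n t x : 3<=r -> 2*r+2<=n -> (r-1)*(n-r) < t.+1*r -> x <= n-2-t -> r*x <= (r-1)*(n-r).
Proof. move=> *; nia. Qed.
Lemma A3 r n : 3<=r -> 2*r+2<=n -> ~ (r*(n-r) <= (r-1)*(n-r)).
Proof. move=> *; nia. Qed.
Lemma A4 q x r n : q+2<=r -> x<=q -> 2*r+2<=n -> x*r <= (n-r)*q.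
Proof. move=> *; nia. Qed.
Lemma A5 q x r n : r*x <= (r-1)*(n-r) -> q = r.-1 -> x*r <= (n-r)*q.
Proof. move=> *; nia. Qed.

Lemma L1 r k x y : k <= r -> y <= r - k + x -> r <= y -> k <= x.
Proof. lia. Qed.

Lemma L2 x h y t : x <= h - y -> h - t <= y -> x <= t.
Proof. lia. Qed.

Lemma L3 a b x r n h t : a <= r - 2 -> b <= n - h - (r - (h - t)) -> a + b = x ->
  t < h -> h - t <= r - 1 -> t + r <= n -> x <= n - 2 - t.
Proof. lia. Qed.

Definition hideP (P : Prop) := P.

Section Bigmax.
Local Open Scope ereal_scope.

Lemma bigmax_ge (I : finType) (P : pred I) (F : I -> \bar rat) i0 :
  P i0 -> F i0 <= \big[Order.max/-oo]_(i | P i) F i.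
Proof. by move=> Pi0; rewrite (bigD1 i0) //= le_max lexx. Qed.

Lemma bigmax_eq (I : finType) (P : pred I) (F : I -> \bar rat) i0 :
  P i0 -> (forall i, P i -> F i <= F i0) -> \big[Order.max/-oo]_(i | P i) F i = F i0.
Proof.
move=> Pi0 hle; apply/le_anti; rewrite bigmax_ge // andbT.
by apply: (big_ind (fun x => x <= F i0)) => // [|x y hx hy]; [exact: leNye| rewrite ge_max hx hy].
Qed.
End Bigmax.

Lemma beta_le (T : finType) (M : matroid T) X Y : rk M X != 0 -> rk M Y != 0 ->
  (beta M X <= beta M Y)%O = (#|X| * rk M Y <= #|Y| * rk M X).
Proof.
move=> hX hY; rewrite /beta (negbTE hX) (negbTE hY) lee_fin.
rewrite ler_pdivrMr ?ltr0n ?lt0n // mulrAC ler_pdivlMr ?ltr0n ?lt0n //.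
by rewrite -!natrM ler_nat.
Qed.

Theorem proposition1 (T : finType) (M : matroid T) :
  paving M ->
  gamma M = beta M (ground M) ->
  (2 * rank M + 2 <= #|ground M|)%N ->
  (3 <= rank M)%N ->
  exists B : {set T},
    basis M B /\
    gamma (delete M B) = beta (delete M B) (ground M :\: B) /\
    rank (delete M B) = rank M.
Proof.
move=> Hpav Hg Hn Hr.
set E := ground M in Hg Hn *.
set r := rank M in Hn Hr *.
set n := #|E| in Hn.
have rE : rk M E = r by [].
have r0 : rk M E != 0 by rewrite rE; lia.
have D : forall X : {set T}, X \subset E -> X != set0 ->
    rk M X != 0 /\ r * #|X| <= n * rk M X.
  move=> X hXE hX0.
  have hle : (beta M X <= beta M E)%O.
    rewrite -Hg /gamma.
    by apply: (@bigmax_ge _ (fun X : {set T} => (X != set0) && (X \subset ground M)) (beta M) X); rewrite /= hX0 hXE.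
  have X0 : rk M X != 0.
    apply/negP => /eqP h0; move: hle; rewrite /beta h0 eqxx (negbTE r0) leye_eq.
    by [].
  split => //; move: hle; rewrite beta_le // rE; lia.
pose Pr := fun Y : {set T} => (Y \subset E) && (rk M Y <= r.-1).
have P0 : Pr set0.
  rewrite /Pr sub0set /=; have := rk_le_card (sub0set E); rewrite cards0; lia.
case: (arg_maxnP (fun Y : {set T} => #|Y|) P0) => H1 /andP [sH1 rH1] Hmax.
set h := #|H1| in Hmax.
have maxH : forall Y : {set T}, Y \subset E -> rk M Y <= r.-1 -> #|Y| <= h.
  by move=> Y hY hr; apply: Hmax; rewrite /Pr hY hr.
have subH : forall Y : {set T}, Y \subset E -> ~~ (Y \subset H1) -> r <= rk M (Y :|: H1).
  move=> Y hY nY; rewrite leqNgt; apply/negP => hlt.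
  have hUE : Y :|: H1 \subset E by rewrite subUset hY sH1.
  have := maxH _ hUE ltac:(lia) => hc.
  have : H1 == Y :|: H1 by rewrite eqEcard subsetUr hc.
  by move/eqP => eH; move: nY; rewrite eH subsetUl.
have interH : forall X : {set T}, X \subset E -> rk M X <= r.-1 -> ~~ (X \subset H1) ->
    #|X :&: H1| <= r - 2.
  move=> X hX hr nX.
  have := subH X hX nX; have := rk_submod hX sH1.
  have hIE : X :&: H1 \subset E by apply: subset_trans (subsetIl _ _) hX.
  have := small_rank Hpav hIE; lia.
have hd : r * h <= (r - 1) * n.
  case: (eqVneq H1 set0) => [e|H10]; first by rewrite /h e cards0 muln0.
  have [_ hD] := D H1 sH1 H10; rewrite -/h; apply: (leq_trans hD); rewrite [(r-1)*n]mulnC; apply: leq_mul => //; lia.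
pose Q (B : {set T}) := forall X : {set T}, X \subset E :\: B -> rk M X <= r.-1 ->
  r * #|X| <= (r - 1) * (n - r).
have [B [hBE hBi cB HQ]] : exists B : {set T}, [/\ B \subset E, indep M B, #|B| = r & Q B].
  case: (leqP (r * h) ((r - 1) * (n - r))) => hcase.
    have [B [_ hBE hBi cB]] := extend (sub0set E) (subxx E) (indep0 M).
    exists B; split => // X hX hr.
    have := maxH X (subset_trans hX (subsetDl _ _)) hr => hXh; apply: leq_trans hcase; by rewrite leq_mul2l hXh orbT.
  pose t := ((r - 1) * (n - r)) %/ r.
  have ht1 : t * r <= (r - 1) * (n - r) by apply: leq_trunc_div.
  have ht2 : (r - 1) * (n - r) < t.+1 * r by apply: ltn_ceil; lia.
  clearbody t.
  pose k := h - t.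
  have [htr hk2 htn] := A1 Hr Hn ht1 ht2 hd hcase.
  have hk1 : 1 <= k by rewrite /k; lia.
  have NL : hideP ((t*r <= (r-1)*(n-r)) /\ ((r-1)*(n-r) < t.+1*r)) by split.
  clear hd hcase ht1 ht2.
  set O := E :\: H1.
  have cO : #|O| = n - h by rewrite /O cardsD (setIidPr sH1).
  have [F [sFO cF]] := @subset_card_ex _ O (r - k) ltac:(rewrite cO; lia).
  have hFE : F \subset E := subset_trans sFO (subsetDl _ _).
  have FH : forall x, x \in F -> x \notin H1.
    by move=> x xF; have := subsetP sFO x xF; rewrite inE => /andP [].
  have nF : ~~ (F \subset H1).
    have : 0 < #|F| by rewrite cF; lia.
    move/card_gt0P => [f fF]; apply/negP => sF.
    by have := FH f fF; rewrite (subsetP sF f fF).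
  have hFU : F \subset F :|: H1 by apply: subsetUl.
  have hUE : F :|: H1 \subset E by rewrite subUset hFE sH1.
  have iF : indep M F.
    rewrite /indep hFE /= indep_small // cF; lia.
  have [B [sFB sBU iB cB]] := extend hFU hUE iF.
  have rU : rk M (F :|: H1) = r.
    have := subH F hFE nF; have := rk_mono hUE (subxx E); rewrite rE => h1 h2; by apply/anti_leq; rewrite h1 h2.
  rewrite rU in cB.
  have hBE : B \subset E := subset_trans sBU hUE.
  have cBH : k <= #|B :&: H1|.
    have : B \subset F :|: (B :&: H1).
      apply/subsetP => b bB; have := subsetP sBU b bB; rewrite !inE bB /=.
      by case/orP => ->; rewrite ?orbT.
    move/subset_leq_card; have := (leq_card_setU F (B :&: H1)).1; rewrite cF cB => h1 h2; apply: (L1 _ h1 h2); exact: leq_trans hk2 (leq_subr 1 r).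
  exists B; split => // X hX hr.
  have hXE : X \subset E := subset_trans hX (subsetDl _ _).
  have XB : forall x, x \in X -> x \notin B.
    by move=> x xX; have := subsetP hX x xX; rewrite inE => /andP [].
  case: (boolP (X \subset H1)) => sXH.
    have : X \subset H1 :\: B.
      by apply/subsetP => x xX; rewrite inE (XB x xX) (subsetP sXH x xX).
    move/subset_leq_card; rewrite cardsD setIC -/h => hX1.
    case: NL => ht1 _.
    have hXt : #|X| <= t := L2 hX1 cBH.
    rewrite mulnC in ht1; apply: leq_trans ht1; by rewrite leq_mul2l hXt orbT.
  have h1 := interH X hXE hr sXH.
  have : X :\: H1 \subset O :\: F.
    apply/subsetP => x; rewrite !inE => /andP [xH xX].
    rewrite xH (subsetP hXE x xX) andbT /= andbT.
    by apply/negP => xF; have := XB x xX; rewrite (subsetP sFB x xF).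
  move/subset_leq_card; rewrite [#|O :\: F|]cardsD (setIidPr sFO) cO cF => h2.
  have h3 := cardsID H1 X.
  have hXn : #|X| <= n - 2 - t := L3 h1 h2 h3 htr hk2 htn.
  case: NL => _ ht2.
  exact: A2 Hr Hn ht2 hXn.
have cEB : #|E :\: B| = n - r by rewrite cardsD (setIidPr hBE) cB.
have hEB : E :\: B \subset E := subsetDl _ _.
have rEB : rk M (E :\: B) = r.
  have := rk_mono hEB (subxx E); rewrite rE => h1.
  apply/eqP; rewrite eqn_leq h1 /= leqNgt; apply/negP => hlt.
  have := HQ (E :\: B) (subxx _) ltac:(lia); rewrite cEB => h2; exact: (A3 Hr Hn h2).
exists B; split; first exact: basis_full hBi cB.
split; last by rewrite /rank /= rEB.
rewrite /gamma /=.
apply: (@bigmax_eq _ _ (beta (delete M B))).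
  rewrite subxx andbT; apply/set0Pn.
  have : 0 < #|E :\: B| by rewrite cEB; lia.
  by move/card_gt0P.
move=> X /andP [X0 hX].
have hXE : X \subset E := subset_trans hX hEB.
have [rX _] := D X hXE X0.
change (beta M X <= beta M (E :\: B))%O.
have rEB0 : rk M (E :\: B) != 0 by rewrite rEB; lia.
rewrite beta_le // rEB cEB.
have hq := rk_mono hXE (subxx E); rewrite rE in hq.
have cX := subset_leq_card hX; rewrite cEB in cX.
case: (ltngtP (rk M X) r.-1) => hc.
- have := small_rank Hpav hXE ltac:(lia) => hs; apply: A4 hs Hn; lia.
- have -> : rk M X = r by lia.
  by rewrite leq_mul2r cX orbT.
- have := HQ X hX ltac:(lia) => hs; apply: A5 hs _; lia.
Qed.
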